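(* Let $G$ be a group. Then $G$ is sofic as a group if and only if $G$ is strongly sofic as a monoid.
   Context: Hamming metric on $\operatorname{Map}(D)$ (monoid of maps $D\to D$, $D$ finite non-empty): $d_D^{\mathrm{Ham}}(f,g)=\frac{1}{|D|}|\{v:f(v)\ne g(v)\}|$. A group $G$ is sofic (as a group) if for every finite $K\subset G$ and $\varepsilon>0$ there are a non-empty finite set $D$ and a map $\sigma\colon G\to\mathrm{Sym}(D)$ (permutations of $D$) with $\sigma(1_G)=\mathrm{Id}_D$, $d_D^{\mathrm{Ham}}(\sigma(k_1k_2),\sigma(k_1)\sigma(k_2))\le\varepsilon$ for all $k_1,k_2\in K$, and $d_D^{\mathrm{Ham}}(\sigma(k_1),\sigma(k_2))\ge1-\varepsilon$ for all distinct $k_1,k_2\in K$. A monoid $M$ is strongly sofic if for every finite $K\subset M$ there is an integer $\Delta_K\ge1$ such that for every $\varepsilon>0$ there exist a non-empty finite set $D$ and a map $\sigma\colon M\to\operatorname{Map}(D)$ with (1) $\sigma(1_M)=\mathrm{Id}_D$; (2) $d_D^{\mathrm{Ham}}(\sigma(k_1k_2),\sigma(k_1)\sigma(k_2))\le\varepsilon$ for $k_1,k_2\in K$; (3) $d_D^{\mathrm{Ham}}(\sigma(k_1),\sigma(k_2))\ge1-\varepsilon$ for distinct $k_1,k_2\in K$; (4) $|\sigma(k)^{-1}(v)|\le\Delta_K$ for $k\in K$, $v\in D$. *)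

(* Defs.v *)
From Stdlib Require Import Reals List.
From mathcomp Require Import all_boot all_fingroup.

Set Implicit Arguments.
Unset Strict Implicit.
Unset Printing Implicit Defensive.

Definition is_monoid (M : Type) (mul : M -> M -> M) (one : M) : Prop :=
  (forall x y z, mul x (mul y z) = mul (mul x y) z) /\
  (forall x, mul one x = x) /\ (forall x, mul x one = x).

Definition is_group (G : Type) (mul : G -> G -> G) (one : G) (inv : G -> G) : Prop :=
  is_monoid mul one /\ (forall x, mul (inv x) x = one) /\ (forall x, mul x (inv x) = one).

Definition d_ham (D : finType) (f g : D -> D) : R :=
  Rdiv (INR #|[set v : D | f v != g v]|) (INR #|D|).

Definition sofic_group (G : Type) (mul : G -> G -> G) (one : G) : Prop :=
  forall (K : list G) (eps : R), Rlt 0 eps ->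
    exists (D : finType) (sigma : G -> {perm D}),
      0 < #|D| /\
      sigma one = 1%g /\
      (forall k1 k2, In k1 K -> In k2 K ->
         Rle (d_ham (fun v => sigma (mul k1 k2) v) (fun v => sigma k1 (sigma k2 v))) eps) /\
      (forall k1 k2, In k1 K -> In k2 K -> k1 <> k2 ->
         Rle (Rminus 1 eps) (d_ham (fun v => sigma k1 v) (fun v => sigma k2 v))).

Definition strongly_sofic_monoid (M : Type) (mul : M -> M -> M) (one : M) : Prop :=
  forall K : list M, exists Delta : nat, 1 <= Delta /\
    forall eps : R, Rlt 0 eps ->
      exists (D : finType) (sigma : M -> D -> D),
        0 < #|D| /\
        (forall v, sigma one v = v) /\
        (forall k1 k2, In k1 K -> In k2 K ->
           Rle (d_ham (sigma (mul k1 k2)) (fun v => sigma k1 (sigma k2 v))) eps) /\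
        (forall k1 k2, In k1 K -> In k2 K -> k1 <> k2 ->
           Rle (Rminus 1 eps) (d_ham (sigma k1) (sigma k2))) /\
        (forall k v, In k K -> #|[set u : D | sigma k u == v]| <= Delta).

(* Main.v *)
Require Import Defs.
From Stdlib Require Import Reals List Lra ClassicalEpsilon Classical.
From mathcomp Require Import all_boot all_fingroup.
From Stdlib Require Import Lia.
From mathcomp Require Import zify.

Set Implicit Arguments.
Unset Strict Implicit.

Definition nd (D : finType) (f g : D -> D) : nat := #|[set v : D | f v != g v]|.

Lemma nd_ext (D : finType) (f f' g g' : D -> D) :
  (forall v, f v = f' v) -> (forall v, g v = g' v) -> nd f g = nd f' g'.
Proof. by move=> Hf Hg; rewrite /nd; apply: eq_card => v; rewrite !inE Hf Hg. Qed.

Lemma nd_sym (D : finType) (f g : D -> D) : nd f g = nd g f.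
Proof. by rewrite /nd; apply: eq_card => v; rewrite !inE eq_sym. Qed.

Lemma nd_tri (D : finType) (f g h : D -> D) : nd f h <= nd f g + nd g h.
Proof.
rewrite /nd; apply: leq_trans (_ : #|[set v | f v != g v] :|: [set v | g v != h v]| <= _).
  apply: subset_leq_card; apply/subsetP => v; rewrite !inE.
  by case: (f v =P g v) => [->|].
by rewrite cardsU leq_subr.
Qed.

Lemma nd_compl (D : finType) (t a b : D -> D) : nd (fun v => t (a v)) (fun v => t (b v)) <= nd a b.
Proof.
rewrite /nd; apply: subset_leq_card; apply/subsetP => v; rewrite !inE.
by apply: contra => /eqP ->.
Qed.

Lemma nd_compr (D : finType) (a b h : D -> D) (Delta : nat) :
  (forall u, #|[set v : D | h v == u]| <= Delta) ->
  nd (fun v => a (h v)) (fun v => b (h v)) <= Delta * nd a b.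
Proof.
move=> Hf; rewrite /nd -[#|[set v | a (h v) != b (h v)]|]sum1_card.
rewrite (partition_big h (fun u => u \in [set u | a u != b u])); last first.
  by move=> v; rewrite !inE.
rewrite mulnC -sum_nat_const; apply: leq_sum => u _.
apply: leq_trans (Hf u); rewrite -sum1_card.
rewrite [X in _ <= X](bigID (fun v => v \in [set v | a (h v) != b (h v)])) /=.
apply: leq_trans (leq_addr _ _).
rewrite big_mkcond [X in _ <= X]big_mkcond /=; apply: leq_sum => v _.
by rewrite !inE; case: (_ != _); case: (_ == _).
Qed.

Lemma ext_perm (D : finType) (n : nat) : forall (f : D -> D) (A : {set D}),
  #|~: A| = n -> {in A &, injective f} -> exists p : {perm D}, {in A, forall x, p x = f x}.
Proof.
elim: n => [|n IH] f A HA Hinj.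
  have AT : forall x, x \in A.
    move=> x; apply/negPn/negP => Hx.
    by move: HA; rewrite (cardD1 x) !inE Hx.
  have fi : injective f by move=> x y; apply: Hinj; apply: AT.
  by exists (perm fi) => x _; rewrite permE.
have [a Ha] : exists a, a \in ~: A by apply/card_gt0P; rewrite HA.
have Hcard := cardsC A; have Hcard2 := cardsC (f @: A).
rewrite card_in_imset // in Hcard2.
have [b Hb] : exists b, b \in ~: (f @: A) by apply/card_gt0P; lia.
pose f' := fun x => if x == a then b else f x.
have HA' : #|~: (a |: A)| = n.
  rewrite setCU.
  move: HA; rewrite (cardsD1 a (~: A)) Ha setDE setIC => -[<-].
  by [].
have [|p Hp] := IH f' (a |: A) HA'; last first.
  exists p => x Hx; rewrite Hp ?inE ?Hx ?orbT // /f'.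
  case: eqP => // Exa; move: Ha; by rewrite -Exa inE Hx.
move=> x y; rewrite !inE /f'.
case: (eqVneq x a) => [->|Hxa] /=; case: (eqVneq y a) => [->|Hya] //= Hx Hy.
- move=> Eb; move: Hb; rewrite inE Eb; by rewrite imset_f.
- move=> Eb; move: Hb; rewrite inE -Eb; by rewrite imset_f.
- by apply: Hinj.
Qed.

Lemma perm_approx (D : finType) (f h : D -> D) :
  exists p : {perm D}, nd (fun v => p v) f <= nd (fun v => f (h v)) id.
Proof.
pose A0 := [set v | f (h v) == v].
have Hinj : {in h @: A0 &, injective f}.
  move=> x y /imsetP [v Hv ->] /imsetP [w Hw ->]; move: Hv Hw; rewrite !inE.
  by move=> /eqP Hv /eqP Hw E; rewrite -Hv -Hw E.
have [p Hp] := ext_perm (erefl _) Hinj.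
exists p.
have Hh : {in A0 &, injective h}.
  move=> v w; rewrite !inE => /eqP Hv /eqP Hw E; by rewrite -Hv -Hw E.
apply: leq_trans (_ : #|~: (h @: A0)| <= _).
  apply: subset_leq_card; apply/subsetP => v; rewrite !inE.
  by apply: contra => Hv; rewrite Hp.
have := cardsC (h @: A0); have := cardsC A0; rewrite card_in_imset //.
have -> : nd (fun v => f (h v)) id = #|~: A0|.
  by rewrite /nd; apply: eq_card => v; rewrite !inE.
lia.
Qed.
Delimit Scope R_scope with Re.
Lemma INR_pos_card (D : finType) : 0 < #|D| -> (0 < INR #|D|)%Re.
Proof. by move=> H; apply: lt_0_INR; apply/ltP. Qed.

Lemma dham_le (D : finType) (f g : D -> D) eps : 0 < #|D| ->
  (d_ham f g <= eps)%Re <-> (INR (nd f g) <= eps * INR #|D|)%Re.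
Proof.
move=> /INR_pos_card hN; rewrite /d_ham -/(nd f g); split => H.
- replace (INR (nd f g)) with (INR (nd f g) / INR #|D| * INR #|D|)%Re by (field; lra).
  apply: Rmult_le_compat_r; lra.
- apply: (Rmult_le_reg_r (INR #|D|)) => //; rewrite /Rdiv Rmult_assoc Rinv_l; lra.
Qed.

Lemma dham_ge (D : finType) (f g : D -> D) c : 0 < #|D| ->
  (c <= d_ham f g)%Re <-> (c * INR #|D| <= INR (nd f g))%Re.
Proof.
move=> /INR_pos_card hN; rewrite /d_ham -/(nd f g); split => H.
- replace (INR (nd f g)) with (INR (nd f g) / INR #|D| * INR #|D|)%Re by (field; lra).
  apply: Rmult_le_compat_r; lra.
- apply: (Rmult_le_reg_r (INR #|D|)) => //; rewrite /Rdiv Rmult_assoc Rinv_l; lra.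
Qed.

Lemma le_INR' (m n : nat) : m <= n -> (INR m <= INR n)%Re.
Proof. by move=> /leP; apply: le_INR. Qed.

Lemma inv_inv_grp (G : Type) (mul : G -> G -> G) (one : G) (inv : G -> G) :
  is_group mul one inv -> forall x, inv (inv x) = x.
Proof.
move=> [[Ha [H1l H1r]] [Hl Hr]] x.
by rewrite -[RHS]H1l -(Hl (inv x)) -Ha Hl H1r.
Qed.

Theorem proposition3p3 (G : Type) (mul : G -> G -> G) (one : G) (inv : G -> G) :
  is_group mul one inv ->
  (sofic_group mul one <-> strongly_sofic_monoid mul one).
Proof.
move=> HG; split.
- move=> Hs K; exists 1%N; split => // eps Heps.
  have [D [sigma [HD [H1 [Hm Hd]]]]] := Hs K eps Heps.
  exists D, (fun g v => sigma g v); split => //; split; first by move=> v; rewrite H1 perm1.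
  split => //; split => //.
  move=> k v _.
  have -> : [set u | sigma k u == v] = [set (sigma k)^-1%g v].
    apply/setP => u; rewrite !inE; apply/eqP/eqP => [<-|->]; by rewrite ?permK ?permKV.
  by rewrite cards1.
- move=> Hs K eps Heps.
  pose KK := flat_map (fun a => List.map (fun b => mul a b) K) K.
  pose S := one :: app K KK.
  pose K' := app S (List.map inv S).
  have inK : forall g, In g K -> In g K'.
    by move=> g Hg; rewrite /K' /S; apply: in_or_app; left; right; apply: in_or_app; left.
  have inKK : forall a b, In a K -> In b K -> In (mul a b) K'.
    move=> a b Ha Hb; rewrite /K' /S; apply: in_or_app; left; right; apply: in_or_app; right.
    apply/in_flat_map; exists a; split => //; exact: in_map.
  have inInv : forall g, In g K' -> In (inv g) K'.
    move=> g; rewrite /K' => /in_app_iff [Hg|Hg]; apply: in_or_app.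
      by right; apply: in_map.
    left; move/in_map_iff: Hg => [s [<- Hs']]; by rewrite (inv_inv_grp HG).
  have [Delta [HDelta Hs2]] := Hs K'.
  have HDr : (1 <= INR Delta)%Re by apply: (le_INR' HDelta).
  pose e' := (eps / (INR Delta + 3))%Re.
  have He' : (0 < e')%Re by apply: Rdiv_lt_0_compat; lra.
  have [D [s [HD [H1 [Hm [Hd Hf]]]]]] := Hs2 e' He'.
  pose Nr := INR #|D|.
  have HN : (0 < Nr)%Re by apply: INR_pos_card.
  have Htau : forall g, exists p : {perm D},
      (In g K' -> (INR (nd (fun v => p v) (s g)) <= e' * Nr)%Re) /\ (g = one -> p = 1%g).
    move=> g; case: (classic (g = one)) => [->|Hne].
      exists 1%g; split => // _.
      rewrite (@nd_ext _ _ id _ id) ?nd_sym /nd; last by [].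
        rewrite (_ : [set v | v != v] = set0) ?cards0 /=; first by have := Rmult_lt_0_compat _ _ He' HN; lra.
        by apply/setP => v; rewrite !inE eqxx.
      by move=> v; rewrite perm1.
    case: (classic (In g K')) => [Hin|Hnin]; last by exists 1%g; split.
    have [p Hp] := perm_approx (s g) (s (inv g)).
    exists p; split => // _.
    apply: Rle_trans (le_INR' Hp) _.
    have := Hm g (inv g) Hin (inInv g Hin).
    rewrite (dham_le _ _ _ HD) -/Nr; apply: Rle_trans; apply: le_INR'.
    have [_ [_ Hr]] := HG.
    rewrite nd_sym (@nd_ext _ _ (s (mul g (inv g))) _ (fun v => s g (s (inv g) v))) //.
    by move=> v; rewrite Hr H1.
  pose tau g := proj1_sig (constructive_indefinite_description _ (Htau g)).
  have Htau1 : forall g, In g K' -> (INR (nd (fun v => tau g v) (s g)) <= e' * Nr)%Re.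
    by move=> g; rewrite /tau; case: (constructive_indefinite_description _ _) => p [].
  have Htau2 : tau one = 1%g.
    by rewrite /tau; case: (constructive_indefinite_description _ _) => p [_ H] /=; apply: H.
  exists D, tau; split => //; split => //; split.
  + move=> k1 k2 Hk1 Hk2; apply/(dham_le _ _ _ HD).
    have Hn : nd (fun v => tau (mul k1 k2) v) (fun v => tau k1 (tau k2 v)) <=
       nd (fun v => tau (mul k1 k2) v) (s (mul k1 k2)) + nd (s (mul k1 k2)) (fun v => s k1 (s k2 v))
       + Delta * nd (s k1) (fun v => tau k1 v) + nd (s k2) (fun v => tau k2 v).
      apply: leq_trans (nd_tri _ (s (mul k1 k2)) _) _; rewrite -!addnA leq_add2l.
      apply: leq_trans (nd_tri _ (fun v => s k1 (s k2 v)) _) _; rewrite leq_add2l.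
      apply: leq_trans (nd_tri _ (fun v => tau k1 (s k2 v)) _) _.
      apply: leq_add; first by apply: nd_compr => u; apply: Hf; apply: inK.
      exact: nd_compl.
    apply: Rle_trans (le_INR' Hn) _.
    rewrite !plus_INR mult_INR.
    have B1 := Htau1 _ (inKK _ _ Hk1 Hk2).
    have B2 := Hm _ _ (inK _ Hk1) (inK _ Hk2); rewrite (dham_le _ _ _ HD) -/Nr in B2.
    have B3 := Htau1 _ (inK _ Hk1); rewrite nd_sym in B3.
    have B4 := Htau1 _ (inK _ Hk2); rewrite nd_sym in B4.
    have B5 : (INR Delta * INR (nd (s k1) (fun v => tau k1 v)) <= INR Delta * (e' * Nr))%Re.
      by apply: Rmult_le_compat_l => //; apply: pos_INR.
    have -> : (eps * INR #|D| = 3 * (e' * Nr) + INR Delta * (e' * Nr))%Re.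
      rewrite /e' /Nr; field; lra.
    lra.
  + move=> k1 k2 Hk1 Hk2 Hne; apply/(dham_ge _ _ _ HD).
    have Hn := nd_tri (s k1) (fun v => tau k1 v)  (s k2).
    have Hn2 := nd_tri (fun v => tau k1 v) (fun v => tau k2 v) (s k2).
    have B2 := Hd _ _ (inK _ Hk1) (inK _ Hk2) Hne; rewrite (dham_ge _ _ _ HD) -/Nr in B2.
    have B3 := Htau1 _ (inK _ Hk1); rewrite nd_sym in B3.
    have B4 := Htau1 _ (inK _ Hk2).
    have C := le_INR' (leq_trans Hn (leq_add (leqnn _) Hn2)).
    rewrite !plus_INR in C.
    have E3 : (3 * e' * Nr <= eps * Nr)%Re.
      apply: Rmult_le_compat_r; first lra.
      have -> : eps = (e' * (INR Delta + 3))%Re by rewrite /e'; field; lra.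
      nra.
    rewrite -/Nr; nra.
Qed.
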